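(* Let $(V,\mu)$ be an infinite, connected, locally finite weighted graph and let $\Omega\subset V$ be a connected subset. Assume that either $\Omega\neq V$ or $(V,\mu)$ is non-parabolic. Let $\sigma\in\ell^+(\Omega)$, $\sigma\not\equiv 0$, and let $1<q<\infty$. Then the following are equivalent: (I) the Dirichlet problem $-\Delta u\ge \sigma u^q$ in $\Omega$, $u=0$ on $\partial\Omega$ (when $\Omega=V$: simply $-\Delta u\ge\sigma u^q$ in $V$) admits a positive solution, i.e. a function $u$ with $u(x)>0$ for all $x\in\Omega$; (II) the integral inequality $u(x)\ge G_\Omega(\sigma u^q)(x)$ for all $x\in\Omega$ admits a positive solution $u$ on $\Omega$; (III) for some, equivalently for all, $o\in\Omega$ with $\sigma(o)>0$, there is a constant $C>0$ such that for all $x\in\Omega$, $$G_\Omega\big(\sigma\, g_\Omega(o,\cdot)^q\big)(x)\le C\, g_\Omega(o,x)<\infty .$$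
   Context: A weighted graph $(V,E,\mu)$: $V$ is a countable vertex set, $\mu:V\times V\to[0,\infty)$ is symmetric, $\mu_{xy}>0$ iff $x\sim y$ (i.e. $\{x,y\}\in E$); locally finite means each vertex has finitely many neighbours; $\mu(x)=\sum_{y\sim x}\mu_{xy}$. The Laplacian is $\Delta u(x)=\frac{1}{\mu(x)}\sum_{y\sim x}\mu_{xy}(u(y)-u(x))$. $\ell(\Omega)$ denotes real functions on $\Omega$, $\ell^+(\Omega)$ nonnegative ones; functions on $\Omega$ are extended by zero outside $\Omega$. $\partial\Omega=\{y\in V\setminus\Omega:\ \exists x\in\Omega,\ x\sim y\}$. The random walk $(X_n)$ has transition probabilities $P(x,y)=\mu_{xy}/\mu(x)$; $\tau_\Omega=\min\{n\ge0: X_n\notin\Omega\}$; $P^\Omega_n(x,y)=\mathbb P_x[X_n=y,\ n<\tau_\Omega]$. The Dirichlet Green function is $g_\Omega(x,y)=\sum_{n\ge0}P_n^\Omega(x,y)/\mu(y)$ for $x,y\in\Omega$ (symmetric), $g=g_V$, and the Green operator is $G_\Omega f(x)=\sum_{y\in\Omega}g_\Omega(x,y)f(y)\mu(y)$. The graph is parabolic if every nonnegative superharmonic function is constant, and non-parabolic otherwise (equivalently $g(x,y)<\infty$). Under the stated assumptions $g_\Omega(x,y)<\infty$ for all $x,y\in\Omega$. *)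

(* Defs.v *)
From HB Require Import structures.
From mathcomp Require Import all_boot all_order all_algebra.
From mathcomp Require Import all_classical all_reals.
From mathcomp Require Import ereal topology normedtype sequences esum exp.
Set Implicit Arguments. Unset Strict Implicit. Unset Printing Implicit Defensive.
Import Order.TTheory GRing.Theory Num.Theory.
Local Open Scope classical_set_scope.
Local Open Scope ring_scope.

Section WeightedGraph.
Variables (R : realType) (V : countType) (mu : V -> V -> R).

Definition nbrs (x : V) : set V := [set y | 0 < mu x y].

Definition weighted_graph : Prop :=
  (forall x y, 0 <= mu x y) /\ (forall x y, mu x y = mu y x).

Definition locally_finite : Prop := forall x, finite_set (nbrs x).

Definition muv (x : V) : R := \sum_(y \in nbrs x) mu x y.

Definition laplacian (u : V -> R) (x : V) : R :=
  (muv x)^-1 * \sum_(y \in nbrs x) mu x y * (u y - u x).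

Inductive reach (A : set V) : V -> V -> Prop :=
  | reach0 x : A x -> reach A x x
  | reachS x y z : A x -> 0 < mu x y -> reach A y z -> reach A x z.

Definition connected_set (A : set V) : Prop :=
  forall x y, A x -> A y -> reach A x y.

Definition bdry (Omega : set V) : set V :=
  [set y | ~ Omega y /\ exists2 x, Omega x & 0 < mu x y].

Definition parabolic : Prop :=
  forall u : V -> R, (forall x, 0 <= u x) -> (forall x, laplacian u x <= 0) ->
    forall x y, u x = u y.

(* P^Omega_n(x,y) = P_x[X_n = y, n < tau_Omega] for the random walk with
   transition probabilities P(x,y) = mu_xy / mu(x); computed by the
   Markov (first-step) recursion over paths staying in Omega. *)
Fixpoint killedP (Omega : set V) (n : nat) (x y : V) : R :=
  match n with
  | 0%N => if (x == y) && `[< Omega x >] then 1 else 0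
  | m.+1 => if `[< Omega x >] then
              \sum_(z \in nbrs x) (mu x z / muv x) * killedP Omega m z y
            else 0
  end.

Definition green (Omega : set V) (x y : V) : \bar R :=
  (\sum_(0 <= n <oo) ((killedP Omega n x y) / muv y)%:E)%E.

Definition green_op (Omega : set V) (f : V -> \bar R) (x : V) : \bar R :=
  (\esum_(y in Omega) (green Omega x y * (f y * (muv y)%:E)))%E.

End WeightedGraph.

(* Main.v *)
Require Import Defs.
From HB Require Import structures.
From mathcomp Require Import all_boot all_order all_algebra.
From mathcomp Require Import all_classical all_reals.
From mathcomp Require Import ereal topology normedtype sequences esum exp.
From mathcomp Require Import ring lra finmap.
Import Order.TTheory GRing.Theory Num.Theory.
Local Open Scope classical_set_scope.
Local Open Scope ring_scope.

Set Implicit Arguments. Unset Strict Implicit.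

Section RealLemmas.
Variable R : realType.
Implicit Types (q a A B X Y : R).

Lemma bern q rho : 0 < rho -> 1 + (1 - q) * (rho - 1) <= rho / rho `^ q + 0 * q.
Proof.
Abort.

Lemma bern q rho : 1 <= q -> 0 < rho -> 1 + (1 - q) * (rho - 1) <= rho / rho `^ q.
Proof.
move=> q1 r0.
have E : rho / rho `^ q = expR ((1 - q) * ln rho).
  rewrite /powR gt_eqF // -{1}(lnK r0) -expRB; congr expR; ring.
have L : 1 + ln rho <= rho by rewrite -{2}(lnK r0); exact: expR_ge1Dx.
rewrite E; apply: le_trans (expR_ge1Dx _); nra.
Qed.

Lemma tangentT q A B : 1 <= q -> 0 < A -> 0 < B ->
  B / B `^ q + (1 - q) * (A - B) / B `^ q <= A / A `^ q.
Proof.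
move=> q1 A0 B0.
have Bq : 0 < B `^ q by rewrite powR_gt0.
have r0 : 0 < A / B by rewrite divr_gt0.
have rq : 0 < (A / B) `^ q by rewrite powR_gt0.
have Aq : A `^ q = (A / B) `^ q * B `^ q by rewrite -powRM ?ltW // divfK ?gt_eqF.
have E : A / A `^ q = (A / B) / (A / B) `^ q * (B / B `^ q).
  rewrite Aq; field; rewrite !gt_eqF //.
have H := bern q1 r0.
rewrite E.
have -> : B / B `^ q + (1 - q) * (A - B) / B `^ q = (1 + (1 - q) * (A / B - 1)) * (B / B `^ q).
  field; rewrite !gt_eqF //.
rewrite ler_wpM2r // divr_ge0 // ltW //.
Qed.

Definition psi q a X := 1 - (1 + X / a) / (1 + X / a) `^ q.
Definition dpsi q a Y := (q - 1) / a / (1 + Y / a) `^ q.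

Lemma psi_tangent q a X Y : 1 <= q -> 0 < a -> 0 <= X -> 0 <= Y ->
  psi q a X <= psi q a Y + dpsi q a Y * (X - Y).
Proof.
move=> q1 a0 X0 Y0.
have A0 : 0 < 1 + X / a by rewrite ltr_wpDr // divr_ge0 // ltW.
have B0 : 0 < 1 + Y / a by rewrite ltr_wpDr // divr_ge0 // ltW.
have := tangentT q1 A0 B0.
have Bq : 0 < (1 + Y / a) `^ q by rewrite powR_gt0.
rewrite /psi /dpsi.
set A := 1 + X / a; set B := 1 + Y / a.
have -> : (1 - q) * (A - B) / B `^ q = - ((q - 1) / a / B `^ q * (X - Y)).
  rewrite /A /B; field; rewrite !gt_eqF //.
lra.
Qed.

Lemma psi0 q a : psi q a 0 = 0.
Proof. by rewrite /psi mul0r addr0 powR1 divr1 subrr. Qed.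

Lemma dpsi_ge0 q a Y : 1 <= q -> 0 < a -> 0 <= Y -> 0 <= dpsi q a Y.
Proof.
move=> q1 a0 Y0; apply: divr_ge0; last exact: powR_ge0.
apply: divr_ge0; [by rewrite subr_ge0 | exact: ltW].
Qed.

Lemma psi_ge0 q a X : 1 <= q -> 0 < a -> 0 <= X -> 0 <= psi q a X.
Proof.
move=> q1 a0 X0; have := psi_tangent q1 a0 (lexx 0) X0; rewrite psi0.
have := dpsi_ge0 q1 a0 X0; nra.
Qed.

Lemma psi_le1 q a X : 0 < a -> 0 <= X -> psi q a X <= 1.
Proof.
move=> a0 X0; rewrite /psi lerBlDr lerDl divr_ge0 ?powR_ge0 //.
by rewrite addr_ge0 // divr_ge0 // ltW.
Qed.

Lemma psi_mono q a X Y : 1 <= q -> 0 < a -> 0 <= X -> X <= Y -> psi q a X <= psi q a Y.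
Proof.
move=> q1 a0 X0 XY; have Y0 : 0 <= Y by apply: le_trans XY.
have := psi_tangent q1 a0 X0 Y0; have := dpsi_ge0 q1 a0 Y0; nra.
Qed.

Lemma dpsi_anti q a X Y : 1 <= q -> 0 < a -> 0 <= X -> X <= Y -> dpsi q a Y <= dpsi q a X.
Proof.
move=> q1 a0 X0 XY; have Y0 : 0 <= Y by apply: le_trans XY.
have BX : 0 < 1 + X / a by rewrite ltr_wpDr // divr_ge0 // ltW.
have BY : 0 < 1 + Y / a by rewrite ltr_wpDr // divr_ge0 // ltW.
rewrite /dpsi ler_wpM2l //; first by apply: divr_ge0; [rewrite subr_ge0 | exact: ltW].
rewrite lef_pV2 ?posrE ?powR_gt0 //.
apply: ge0_ler_powR; [lra | rewrite nnegrE; exact: ltW | rewrite nnegrE; exact: ltW | ].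
by rewrite lerD2l ler_pM2r ?invr_gt0.
Qed.

Lemma core (I : Type) q a (s : seq I) (p hz wz : I -> R) h w sg :
  1 <= q -> 0 < a -> 0 < h -> a * h <= w ->
  (forall z, 0 <= p z) -> (forall z, 0 <= hz z) -> (forall z, a * hz z <= wz z) ->
  \sum_(z <- s) p z * hz z <= h -> 0 <= sg ->
  sg * w `^ q + \sum_(z <- s) p z * wz z <= w ->
  (q - 1) / a * (a / 2) `^ q * sg * h `^ q +
    \sum_(z <- s) p z * (hz z * psi q a (wz z / hz z)) <= h * psi q a (w / h).
Proof.
move=> q1 a0 h0 ahw p0 hz0 awz Qh sg0 Hw.
set S := \sum_(z <- s) p z * wz z.
set Q := \sum_(z <- s) p z * hz z.
have wz0 z : 0 <= wz z by apply: le_trans _ (awz z); rewrite mulr_ge0 // ltW.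
have S0 : 0 <= S by apply: sumr_ge0 => z _; rewrite mulr_ge0.
set s0 := S / h.
have s00 : 0 <= s0 by rewrite divr_ge0 // ltW.
set t := w / h.
have ta : a <= t by rewrite /t ler_pdivlMr.
have t0 : 0 <= t by apply: le_trans ta; exact: ltW.
have wq0 : 0 <= w `^ q by exact: powR_ge0.
(* Jensen part *)
have J : \sum_(z <- s) p z * (hz z * psi q a (wz z / hz z)) <=
    Q * psi q a s0 + dpsi q a s0 * (S - Q * s0).
  have -> : Q * psi q a s0 + dpsi q a s0 * (S - Q * s0) =
      \sum_(z <- s) (p z * hz z * psi q a s0 + dpsi q a s0 * (p z * wz z - p z * hz z * s0)).
    rewrite big_split /= -mulr_suml -mulr_sumr sumrB -mulr_suml.
    by rewrite /Q /S.
  apply: ler_sum => z _.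
  have [hz00|hzp] := eqVneq (hz z) 0.
    rewrite hz00 !mulr0 !mul0r mulr0 add0r subr0; apply: mulr_ge0.
      exact: dpsi_ge0.
    by rewrite mulr_ge0.
  have hzp' : 0 < hz z by rewrite lt_def hzp hz0.
  have tz0 : 0 <= wz z / hz z by rewrite divr_ge0.
  have T := psi_tangent q1 a0 tz0 s00.
  have -> : p z * wz z = p z * hz z * (wz z / hz z) by field; rewrite gt_eqF.
  have pz0 : 0 <= p z * hz z by rewrite mulr_ge0.
  rewrite mulrA; move: T; set u := psi q a (wz z / hz z); set v := psi q a s0;
    set d := dpsi q a s0; set tz := wz z / hz z; set ph := p z * hz z => T.
  have : ph * u <= ph * (v + d * (tz - s0)) by rewrite ler_wpM2l.
  move=> H; apply: le_trans H _.
  have -> : ph * (v + d * (tz - s0)) = ph * v + d * (ph * tz - ph * s0) by ring.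
  by [].
have J2 : Q * psi q a s0 + dpsi q a s0 * (S - Q * s0) <= h * psi q a s0.
  have T0 := psi_tangent q1 a0 (lexx 0) s00; rewrite psi0 in T0.
  have ES : S = h * s0 by rewrite /s0 mulrC divfK // gt_eqF.
  rewrite ES.
  have : 0 <= (h - Q) * (psi q a s0 - s0 * dpsi q a s0).
    apply: mulr_ge0; first by rewrite subr_ge0.
    lra.
  move=> H; lra.
set F := sg * w `^ q / h.
have F0 : 0 <= F by rewrite divr_ge0 ?mulr_ge0 // ltW.
have sFt : s0 + F <= t.
  rewrite /s0 /F /t -mulrDl ler_pM2r ?invr_gt0 //; move: Hw; rewrite -/S; lra.
have sF0 : 0 <= s0 + F by rewrite addr_ge0.
have T1 := psi_tangent q1 a0 s00 sF0.
have M1 := psi_mono q1 a0 sF0 sFt.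
have D1 := dpsi_anti q1 a0 sF0 sFt.
have dt0 := dpsi_ge0 q1 a0 t0.
have C1 : psi q a s0 + dpsi q a t * F <= psi q a t.
  have : dpsi q a t * F <= dpsi q a (s0 + F) * F by rewrite ler_wpM2r.
  move=> H; lra.
have C2 : h * psi q a s0 + dpsi q a t * (sg * w `^ q) <= h * psi q a t.
  have : h * (psi q a s0 + dpsi q a t * F) <= h * psi q a t by rewrite ler_wpM2l // ltW.
  by rewrite mulrDr /F mulrCA [_ * (_ / h)]mulrC divfK ?gt_eqF // mulrCA.
have D : (q - 1) / a * (a / 2) `^ q * h `^ q <= dpsi q a t * w `^ q.
  have B0 : 0 < 1 + t / a by rewrite ltr_wpDr // divr_ge0 // ltW.
  have Bt : 1 + t / a <= 2 * t / a.
    rewrite ler_pdivlMr // mulrDl mul1r divfK ?gt_eqF //; lra.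
  have Bq : (1 + t / a) `^ q <= (2 * t / a) `^ q.
    apply: ge0_ler_powR; [lra | rewrite nnegrE; exact: ltW | rewrite nnegrE | exact: Bt].
    by apply: le_trans Bt; exact: ltW.
  have E : w `^ q = (2 * t / a) `^ q * ((a / 2) `^ q * h `^ q).
    have E1 : 2 * t / a * (a / 2 * h) = w.
      by rewrite /t; field; rewrite (gt_eqF a0) (gt_eqF h0).
    have n1 : 0 <= 2 * t / a by apply: divr_ge0; [apply: mulr_ge0 | apply: ltW].
    have n2 : 0 <= a / 2 by rewrite divr_ge0 // ltW.
    have n3 : 0 <= h by exact: ltW.
    by rewrite -{1}E1 (@powRM R (2*t/a) (a/2*h) q n1 (mulr_ge0 n2 n3)) (@powRM R (a/2) h q n2 n3).
  have Bq0 : 0 < (1 + t / a) `^ q by rewrite powR_gt0.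
  rewrite /dpsi E.
  set k := (q - 1) / a; set X := (a / 2) `^ q * h `^ q; set Cq := (2 * t / a) `^ q.
  set Bq' := (1 + t / a) `^ q.
  have k0 : 0 <= k by apply: divr_ge0; [rewrite subr_ge0 | exact: ltW].
  have X0 : 0 <= X by rewrite mulr_ge0 ?powR_ge0.
  have -> : k * (a / 2) `^ q * h `^ q = k * X by rewrite /X mulrA.
  have -> : k / Bq' * (Cq * X) = k * X * (Cq / Bq') by field; rewrite gt_eqF.
  apply: ler_peMr; first by rewrite mulr_ge0.
  by rewrite ler_pdivlMr // mul1r.
have D2 : (q - 1) / a * (a / 2) `^ q * sg * h `^ q <= dpsi q a t * (sg * w `^ q).
  have -> : (q - 1) / a * (a / 2) `^ q * sg * h `^ q = sg * ((q - 1) / a * (a / 2) `^ q * h `^ q)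
    by ring.
  have -> : dpsi q a t * (sg * w `^ q) = sg * (dpsi q a t * w `^ q) by ring.
  exact: ler_wpM2l.
lra.
Qed.
End RealLemmas.

Unset Implicit Arguments.

Section Thm.
Variables (R : realType) (V : countType) (mu : V -> V -> R) (Omega : set V).
Hypothesis mu_ge0 : forall x y, 0 <= mu x y.
Hypothesis mu_sym : forall x y, mu x y = mu y x.
Hypothesis lf : locally_finite mu.
Hypothesis muv_gt0 : forall x, 0 < muv mu x.

Definition Nb x : {fset V} := fset_set (nbrs mu x).

Lemma memNb x y : (y \in Nb x) = (0 < mu x y).
Proof. rewrite /Nb in_fset_set; [by apply/idP/idP => [/set_mem|/mem_set] | exact: lf]. Qed.

Lemma sumNb x (F : V -> R) : \sum_(y \in nbrs mu x) F y = \sum_(y <- Nb x) F y.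
Proof. by rewrite fsbig_finite //; exact: (lf x). Qed.

Definition P x y := mu x y / muv mu x.
Definition K n x y := killedP mu Omega n x y.

Lemma P_ge0 x y : 0 <= P x y.
Proof. by rewrite /P divr_ge0 // ltW. Qed.

Lemma muvE x : muv mu x = \sum_(z <- Nb x) mu x z.
Proof. by rewrite /muv sumNb. Qed.

Lemma sumP x : \sum_(z <- Nb x) P x z = 1.
Proof. by rewrite /P -mulr_suml -muvE divff // gt_eqF. Qed.

Lemma K0 x y : K 0 x y = if (x == y) && `[< Omega x >] then 1 else 0.
Proof. by []. Qed.

Lemma KS n x y : K n.+1 x y =
  if `[< Omega x >] then \sum_(z <- Nb x) P x z * K n z y else 0.
Proof. by rewrite /K /= sumNb. Qed.

Lemma K_ge0 n x y : 0 <= K n x y.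
Proof.
elim: n x => [|n IH] x; first by rewrite K0; case: ifP.
rewrite KS; case: ifP => // _; apply: sumr_ge0 => z _.
by rewrite mulr_ge0 // P_ge0.
Qed.

Lemma K_outl n x y : ~ Omega x -> K n x y = 0.
Proof.
move=> Hx; case: n => [|n]; first by rewrite K0 (asboolF Hx) andbF.
by rewrite KS (asboolF Hx).
Qed.

Lemma K_outr n x y : ~ Omega y -> K n x y = 0.
Proof.
move=> Hy; elim: n x => [|n IH] x.
  rewrite K0; case: eqP => [xy|] //=; by rewrite xy (asboolF Hy).
rewrite KS; case: ifP => // _; apply: big1 => z _; by rewrite IH mulr0.
Qed.

Lemma muv_neq0 x : muv mu x != 0.
Proof. by rewrite gt_eqF. Qed.

Lemma sum_delta (s : seq V) (F : V -> R) y : uniq s ->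
  \sum_(z <- s) (if z == y then F z else 0) = if y \in s then F y else 0.
Proof.
move=> us; case: ifP => ys.
  by rewrite (bigD1_seq y) //= eqxx big1 ?addr0 // => z /negbTE ->.
by rewrite big_seq; apply: big1 => z zs; case: eqP => // zy; move: ys; rewrite -zy zs.
Qed.

Definition ind (A : set V) z : R := if `[< A z >] then 1 else 0.

Lemma KSr n x y : K n.+1 x y =
  if `[< Omega y >] then \sum_(z <- Nb y) K n x z * P z y else 0.
Proof.
elim: n x y => [|n IH] x y.
  have E1 : \sum_(z <- Nb x) P x z * K 0 z y =
      \sum_(z <- Nb x) (if z == y then P x y * ind Omega y else 0).
    apply: eq_bigr => z _; rewrite K0 /ind; case: eqP => [->|]; last by rewrite /= mulr0.
    by case: ifP => _; rewrite ?mulr1 ?mulr0.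
  have E2 : \sum_(z <- Nb y) K 0 x z * P z y =
      \sum_(z <- Nb y) (if z == x then ind Omega x * P x y else 0).
    apply: eq_bigr => z _; rewrite K0 /ind eq_sym; case: eqP => [->|]; last by rewrite /= mul0r.
    by case: ifP => _; rewrite ?mul1r ?mul0r.
  rewrite KS E1 E2 !sum_delta ?fset_uniq // !memNb mu_sym /ind.
  by case: (asboolP (Omega x)); case: (asboolP (Omega y)); case: (0 < mu y x); rewrite /= ?mulr0 ?mulr1 ?mul1r ?mul0r.
rewrite KS; case: (boolP `[< Omega y >]) => Oy; last first.
  case: ifP => // _; apply: big1 => w _; by rewrite IH (negbTE Oy) mulr0.
case: (boolP `[< Omega x >]) => Ox; last first.
  by apply/esym/big1 => z _; rewrite KS (negbTE Ox) mul0r.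
under eq_bigr do rewrite IH Oy mulr_sumr.
rewrite exchange_big /=; apply: eq_bigr => z _.
rewrite KS Ox mulr_suml; apply: eq_bigr => w _; by rewrite mulrA.
Qed.

Lemma K_sym n x y : muv mu x * K n x y = muv mu y * K n y x.
Proof.
elim: n x y => [|n IH] x y.
  rewrite !K0 eq_sym; case: eqP => [->|] //=; by rewrite ?mulr0.
rewrite KS KSr; case: ifP => Ox; last by rewrite !mulr0.
rewrite !mulr_sumr; apply: eq_bigr => z _.
have Hz : K n z y = muv mu y * K n y z / muv mu z.
  by rewrite -IH mulrC mulrA mulVf ?mul1r // muv_neq0.
rewrite Hz /P mu_sym; field.
by rewrite muv_neq0 muv_neq0.
Qed.

Section Bridges.
Local Open Scope ereal_scope.

Lemma series_le (u : nat -> \bar R) (M : \bar R) : (forall n, 0 <= u n) ->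
  (forall N, \sum_(0 <= n < N) u n <= M) -> \sum_(0 <= n <oo) u n <= M.
Proof.
move=> u0 HM.
have := ereal_nondecreasing_series (u_:=u) (P:=xpredT) (N:=0%N) (fun n _ _ => u0 n).
move/ereal_nondecreasing_cvgn/cvg_lim => -> //.
by apply: ge_ereal_sup => _ [N _ <-]; exact: HM.
Qed.

Lemma green_ge0 x y : 0 <= green mu Omega x y.
Proof.
apply: nneseries_ge0 => n _ _; rewrite lee_fin divr_ge0 ?K_ge0 //.
exact: ltW.
Qed.

Lemma term_series x y c : (0 <= c)%R ->
  green mu Omega x y * (c * muv mu y)%:E = \sum_(0 <= n <oo) (K n x y * c)%:E.
Proof.
move=> c0; rewrite /green muleC -nneseriesZl; last first.
  by move=> n _; rewrite lee_fin divr_ge0 ?K_ge0 // ltW.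
apply: congr_lim; apply/funext => N; apply: eq_bigr => n _.
rewrite -EFinM; congr EFin; rewrite /K; field; exact: muv_neq0.
Qed.

End Bridges.

Definition Sfin (f : V -> R) N (A : {fset V}) x : R :=
  \sum_(n < N) \sum_(y <- A) K n x y * f y.
Definition Gop (f : V -> R) x := green_op mu Omega (fun y => (f y)%:E) x.

Lemma LB f N (A : {fset V}) x : (forall y, y \in A -> Omega y) ->
  (forall y, 0 <= f y) -> ((Sfin f N A x)%:E <= Gop f x)%E.
Proof.
move=> AO f0; rewrite /Gop /green_op; apply: esum_ge.
exists [set` A]; first by split; [exact: finite_fset | move=> y /= /AO].
rewrite fsbig_finite ?finite_fset // set_fsetK.
rewrite /Sfin exchange_big /= -sumEFin; apply: lee_sum => y _.
rewrite term_series //.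
apply: (le_trans _ (nneseries_lim_ge (m:=0%N) N _)).
  by rewrite sumEFin big_mkord.
by move=> n _ _; rewrite lee_fin mulr_ge0 ?K_ge0.
Qed.

Lemma UB f x (M : \bar R) : (forall y, 0 <= f y) ->
  (forall N (A : {fset V}), (forall y, y \in A -> Omega y) -> ((Sfin f N A x)%:E <= M)%E) ->
  (Gop f x <= M)%E.
Proof.
move=> f0 HM; rewrite /Gop /green_op /esum.
apply: ge_ereal_sup => _ [X [finX XO] <-].
rewrite fsbig_finite //.
under eq_bigr do rewrite term_series //.
rewrite -nneseries_sum; last by move=> y n _; rewrite lee_fin mulr_ge0 ?K_ge0.
apply: series_le.
  by move=> n; rewrite sume_ge0 // => y _; rewrite lee_fin mulr_ge0 ?K_ge0.
move=> N; rewrite big_mkord.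
under eq_bigr do rewrite sumEFin.
rewrite sumEFin; apply: HM => y.
by rewrite in_fset_set // => /set_mem /XO.
Qed.

Lemma sumK0 f (A : {fset V}) x :
  \sum_(y <- A) K 0 x y * f y = if (x \in A) && `[< Omega x >] then f x else 0.
Proof.
have -> : \sum_(y <- A) K 0 x y * f y =
    \sum_(y <- A) (if y == x then (if `[< Omega x >] then f x else 0) else 0).
  apply: eq_bigr => y _; rewrite K0 eq_sym; case: eqP => [->|] /=; last by rewrite mul0r.
  by case: ifP; rewrite ?mul1r ?mul0r.
rewrite sum_delta ?fset_uniq //; by case: (x \in A).
Qed.

Lemma Sfin_out f N A x : ~ Omega x -> Sfin f N A x = 0.
Proof. move=> Hx; apply: big1 => n _; apply: big1 => y _; by rewrite K_outl // mul0r. Qed.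

Lemma SfinS f N A x : Omega x -> Sfin f N.+1 A x =
  \sum_(y <- A) K 0 x y * f y + \sum_(z <- Nb x) P x z * Sfin f N A z.
Proof.
move=> Ox; rewrite /Sfin big_ord_recl /=; congr (_ + _).
under eq_bigr => i _ do under eq_bigr => y _ do rewrite KS (asboolT Ox) mulr_suml.
under eq_bigr => i _ do rewrite exchange_big /=.
rewrite exchange_big /=; apply: eq_bigr => z _.
rewrite mulr_sumr; apply: eq_bigr => i _; rewrite mulr_sumr; apply: eq_bigr => y _.
by rewrite mulrA.
Qed.

Lemma Sfin_ge0 f N A x : (forall y, 0 <= f y) -> 0 <= Sfin f N A x.
Proof.
move=> f0; apply: sumr_ge0 => n _; apply: sumr_ge0 => y _; by rewrite mulr_ge0 ?K_ge0.
Qed.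

Lemma Sfin_mono f N N' (A A' : {fset V}) x : (forall y, 0 <= f y) ->
  (N <= N')%N -> (A `<=` A')%fset -> Sfin f N A x <= Sfin f N' A' x.
Proof.
move=> f0 NN AA; rewrite /Sfin (big_ord_widen N' (fun n => \sum_(y <- A) K n x y * f y) NN).
rewrite big_mkcond /=; apply: ler_sum => n _.
have H1 : \sum_(y <- A) K n x y * f y <= \sum_(y <- A') K n x y * f y.
  rewrite [X in X <= _](_ : _ = \sum_(y <- A) (if y \in A then K n x y * f y else 0)); last first.
    by rewrite big_seq_cond [RHS]big_seq_cond; apply: eq_bigr => y /andP[-> _].
  rewrite (big_fset_incl _ AA (F := fun y => if y \in A then K n x y * f y else 0)); last first.
    by move=> y _ /negbTE ->.
  apply: ler_sum => y _; case: ifP => // _; by rewrite mulr_ge0 ?K_ge0.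
case: ifP => // _; apply: sumr_ge0 => y _; by rewrite mulr_ge0 ?K_ge0.
Qed.

Lemma minimal f w : (forall y, 0 <= f y) -> (forall y, 0 <= w y) ->
  (forall x, Omega x -> f x + \sum_(z <- Nb x) P x z * w z <= w x) ->
  forall x, Omega x -> (Gop f x <= (w x)%:E)%E.
Proof.
move=> f0 w0 Hw x Ox; apply: UB => // N A AO; rewrite lee_fin.
elim: N x {Ox} => [|N IH] x; first by rewrite /Sfin big_ord0.
have [Ox|Ox] := pselect (Omega x); last by rewrite Sfin_out.
rewrite SfinS // sumK0; apply: le_trans (Hw x Ox); apply: lerD.
  by case: ifP => // _; rewrite f0.
by apply: ler_sum => z _; rewrite ler_wpM2l ?P_ge0.
Qed.

Lemma approx f z e : (forall y, 0 <= f y) -> Gop f z \is a fin_num -> 0 < e ->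
  exists N A, (forall y, y \in A -> Omega y) /\ fine (Gop f z) - e <= Sfin f N A z.
Proof.
move=> f0 fin e0.
have [//|H] := pselect (exists N A, (forall y, y \in A -> Omega y) /\
   fine (Gop f z) - e <= Sfin f N A z).
exfalso.
have : (Gop f z <= (fine (Gop f z) - e)%:E)%E.
  apply: UB => // N A AO; rewrite lee_fin; rewrite leNgt; apply/negP => Hlt.
  by apply: H; exists N, A; split => //; exact: ltW.
rewrite -{1}(fineK fin) lee_fin => Hc.
lra.
Qed.

Lemma combine f e (T : V -> R) (s : seq V) : (forall y, 0 <= f y) ->
  (forall z, z \in s -> exists N A, (forall y, y \in A -> Omega y) /\ T z - e <= Sfin f N A z) ->
  exists N A, (forall y, y \in A -> Omega y) /\ forall z, z \in s -> T z - e <= Sfin f N A z.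
Proof.
move=> f0; elim: s => [|z s IH] H.
  by exists 0%N, fset0; split => // y; rewrite inE.
have [N1 [A1 [HA1 H1]]] := H z (mem_head _ _).
have [N2 [A2 [HA2 H2]]] : exists N A, (forall y, y \in A -> Omega y) /\
    forall z, z \in s -> T z - e <= Sfin f N A z.
  by apply: IH => y ys; apply: H; rewrite inE ys orbT.
exists (maxn N1 N2), (A1 `|` A2)%fset; split.
  by move=> y; rewrite inE => /orP[/HA1|/HA2].
move=> y; rewrite inE => /orP[/eqP ->|ys].
  by apply: le_trans H1 _; apply: Sfin_mono => //; [exact: leq_maxl | exact: fsubsetUl].
by apply: le_trans (H2 y ys) _; apply: Sfin_mono => //; [exact: leq_maxr | exact: fsubsetUr].
Qed.

Definition W f z := if `[< Omega z >] then fine (Gop f z) else 0.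

Lemma superharm f x : (forall y, 0 <= f y) ->
  (forall z, Omega z -> Gop f z \is a fin_num) -> Omega x ->
  f x + \sum_(z <- Nb x) P x z * W f z <= W f x.
Proof.
move=> f0 fin Ox; apply/ler_addgt0Pr => e e0.
have [N [A [AO HA]]] : exists N A, (forall y, y \in A -> Omega y) /\
    forall z, z \in Nb x -> W f z - e <= Sfin f N A z.
  apply: combine => // z _; rewrite /W; case: (asboolP (Omega z)) => Oz.
    exact: approx (fin z Oz) e0.
  by exists 0%N, fset0; split => [y|]; rewrite ?inE // /Sfin big_ord0 sub0r oppr_le0 ltW.
have AO' : forall y, y \in (x |` A)%fset -> Omega y.
  by move=> y; rewrite !inE => /orP[/eqP ->|/AO].
have := @LB f N.+1 (x |` A)%fset x AO' f0; rewrite /W (asboolT Ox) -{1}(fineK (fin x Ox)) lee_fin.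
rewrite SfinS // sumK0 fset1U1 (asboolT Ox) /= => HL.
have H2 : \sum_(z <- Nb x) P x z * (W f z - e) <= \sum_(z <- Nb x) P x z * Sfin f N (x |` A)%fset z.
  rewrite big_seq [X in _ <= X]big_seq; apply: ler_sum => z zN; apply: ler_wpM2l; first exact: P_ge0.
  apply: le_trans (HA z zN) _; apply: Sfin_mono => //; exact: fsubsetU1.
have H3 : \sum_(z <- Nb x) P x z * (W f z - e) = \sum_(z <- Nb x) P x z * W f z - e.
  rewrite -[e in RHS]mul1r -(sumP x) mulr_suml -sumrB; apply: eq_bigr => z _; by rewrite mulrBr.
rewrite /W in H2 H3 *; lra.
Qed.

Lemma lapE u x : laplacian mu u x = \sum_(z <- Nb x) P x z * u z - u x.
Proof.
rewrite /laplacian sumNb mulr_sumr.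
rewrite [X in _ = _ - X](_ : u x = \sum_(z <- Nb x) P x z * u x); last first.
  by rewrite -mulr_suml sumP mul1r.
rewrite -sumrB; apply: eq_bigr => z _; rewrite /P; field; exact: muv_neq0.
Qed.

Lemma sum_ge_term (s : seq V) (F : V -> R) z : uniq s -> z \in s ->
  (forall y, 0 <= F y) -> F z <= \sum_(y <- s) F y.
Proof.
move=> us zs F0; rewrite (bigD1_seq z) //= lerDl; apply: sumr_ge0 => y _; exact: F0.
Qed.

Lemma reach_K x y : reach mu Omega x y -> exists n, 0 < K n x y.
Proof.
elim => [z Oz|a b c Oa ab _ [n Hn]].
  by exists 0%N; rewrite K0 eqxx (asboolT Oz).
exists n.+1; rewrite KS (asboolT Oa).
apply: lt_le_trans (@sum_ge_term (Nb a) (fun z => P a z * K n z c) b (fset_uniq _) _ _).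
- by rewrite mulr_gt0 // /P divr_gt0.
- by rewrite memNb.
- by move=> z; rewrite mulr_ge0 ?P_ge0 ?K_ge0.
Qed.

Local Open Scope ereal_scope.

Lemma green_sym x y : green mu Omega x y = green mu Omega y x.
Proof.
rewrite /green; apply: congr_lim; apply/funext => N; apply: eq_bigr => n _.
congr EFin; have := K_sym n x y; rewrite /K => E.
apply: (mulfI (muv_neq0 x)); rewrite mulrA E; field.
by rewrite muv_neq0 muv_neq0.
Qed.

Lemma green_outr x y : ~ Omega y -> green mu Omega x y = 0.
Proof.
move=> Hy; rewrite /green eseries0 // => n _ _.
by have := K_outr n x y Hy; rewrite /K => ->; rewrite mul0r.
Qed.

Lemma green_pos x y : reach mu Omega x y -> 0 < green mu Omega x y.
Proof.
move=> /reach_K [n Hn]; rewrite /green.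
apply: (lt_le_trans _ (nneseries_lim_ge (m:=0%N) n.+1 _)); last first.
  by move=> k _ _; rewrite lee_fin divr_ge0 ?K_ge0 // ltW.
rewrite big_nat_recr //=.
apply: (lt_le_trans _ (leeDr _ _)); first by rewrite lte_fin divr_gt0.
by rewrite sume_ge0 // => k _; rewrite lee_fin divr_ge0 ?K_ge0 // ltW.
Qed.

Lemma Gop_ge0 f x : (forall y, (0 <= f y)%R) -> 0 <= Gop f x.
Proof.
move=> f0; apply: esum_ge0 => y _; apply: mule_ge0; first exact: green_ge0.
by rewrite lee_fin mulr_ge0 // ltW.
Qed.

Lemma Gop_single f x o : (forall y, (0 <= f y)%R) -> Omega o ->
  green mu Omega x o * (f o * muv mu o)%:E <= Gop f x.
Proof.
move=> f0 Oo; rewrite /Gop /green_op; apply: esum_ge; exists [set o].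
  by split; [exact: finite_set1 | move=> y ->].
rewrite fsbig_set1 //.
Qed.

Lemma Gop_scale f k x : (forall y, (0 <= f y)%R) -> (0 <= k)%R ->
  Gop (fun y => k * f y)%R x <= k%:E * Gop f x.
Proof.
move=> f0 k0; apply: UB => [y|N A AO]; first by rewrite mulr_ge0.
have -> : Sfin (fun y => k * f y)%R N A x = (k * Sfin f N A x)%R.
  rewrite /Sfin mulr_sumr; apply: eq_bigr => n _; rewrite mulr_sumr.
  by apply: eq_bigr => y _; rewrite mulrCA.
rewrite EFinM; apply: lee_wpmul2l; first by rewrite lee_fin.
exact: LB.
Qed.

Lemma Gop_delta x o : Omega o ->
  Gop (fun y => if y == o then (muv mu o)^-1 else 0)%R x = green mu Omega x o.
Proof.
move=> Oo; rewrite /Gop /green_op (esumID [set o]); last first.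
  move=> y _; apply: mule_ge0; first exact: green_ge0.
  rewrite lee_fin mulr_ge0 ?(ltW (muv_gt0 y)) //; case: eqP => _ //; by rewrite invr_ge0 ltW.
have -> : Omega `&` [set o] = [set o].
  by apply/seteqP; split => [y [] //|y ->]; split.
rewrite esum_set1; last first.
  apply: mule_ge0; first exact: green_ge0.
  by rewrite eqxx lee_fin mulr_ge0 ?invr_ge0 ?ltW.
rewrite esum1 ?adde0; last first.
  move=> y [_ Hy]; have -> : (y == o) = false by apply/negbTE/eqP. by rewrite mul0e mule0.
by rewrite eqxx -EFinM mulVf ?muv_neq0 // mule1.
Qed.

Section Main.
Variables (sigma : V -> R) (q : R).
Hypothesis sigma_ge0 : forall x, (0 <= sigma x)%R.
Hypothesis sigma_out : forall x, ~ Omega x -> sigma x = 0%R.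
Hypothesis q1 : (1 < q)%R.
Hypothesis connO : connected_set mu Omega.
Local Open Scope ring_scope.

Definition pw (w : V -> R) := [/\ (forall x, 0 <= w x), (forall x, ~ Omega x -> w x = 0),
  (forall x, Omega x -> 0 < w x) &
  (forall x, Omega x -> sigma x * w x `^ q + \sum_(z <- Nb x) P x z * w z <= w x)].

Definition Iprop (u : V -> R) := (forall x, Omega x -> 0 < u x) /\
      (forall x, bdry mu Omega x -> u x = 0) /\
      (forall x, Omega x -> sigma x * u x `^ q <= - laplacian mu u x).

Definition IIprop (u : V -> R) := (forall x, Omega x -> 0 < u x) /\
      (forall x, Omega x ->
         (green_op mu Omega (fun y => (sigma y * u y `^ q)%:E) x <= (u x)%:E)%E).

Lemma pw_to_I w : pw w -> Iprop w.
Proof.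
move=> [w0 wout wpos wsup]; split => //; split.
  by move=> x [nO _]; exact: wout.
move=> x Ox; rewrite lapE opprB; have := wsup x Ox; lra.
Qed.

Lemma I_to_II u : Iprop u -> IIprop u.
Proof.
move=> [upos [ubd ulap]]; split => // x Ox.
pose w' y := if `[< Omega y >] then u y else 0.
have -> : u x = w' x by rewrite /w' (asboolT Ox).
apply: (@minimal (fun y => sigma y * u y `^ q) w') => //.
- by move=> y; rewrite mulr_ge0 ?powR_ge0.
- by move=> y; rewrite /w'; case: asboolP => // /upos /ltW.
move=> y Oy; rewrite {2}/w' (asboolT Oy).
have -> : \sum_(z <- Nb y) P y z * w' z = \sum_(z <- Nb y) P y z * u z.
  rewrite big_seq [RHS]big_seq; apply: eq_bigr => z zN; rewrite /w'.
  case: asboolP => // nO; rewrite ubd ?mulr0 //; split => //.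
  by exists y => //; rewrite -memNb.
have := ulap y Oy; rewrite lapE opprB; lra.
Qed.

Hypothesis sig_ex : exists2 o, Omega o & 0 < sigma o.

Lemma fin_bound (e : \bar R) (b : R) : (0 <= e)%E -> (e <= b%:E)%E -> e \is a fin_num.
Proof.
move=> e0 eb; rewrite ge0_fin_numE //; apply: le_lt_trans eb _; exact: ltry.
Qed.

Lemma II_to_pw u : IIprop u -> exists w, pw w.
Proof.
move=> [upos uG].
pose f y := sigma y * u y `^ q.
have f0 y : 0 <= f y by rewrite mulr_ge0 ?powR_ge0.
have fin z : Omega z -> Gop f z \is a fin_num.
  by move=> Oz; exact: (@fin_bound _ (u z) (Gop_ge0 f z f0) (uG z Oz)).
have Wu z : Omega z -> W f z <= u z.
  by move=> Oz; rewrite /W (asboolT Oz) -lee_fin (fineK (fin z Oz)); exact: uG.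
have W0 z : 0 <= W f z.
  rewrite /W; case: asboolP => // Oz; apply: fine_ge0; exact: Gop_ge0.
exists (W f); split => //.
- by move=> x nO; rewrite /W (asboolF nO).
- move=> x Ox; case: sig_ex => o Oo so.
  have [n Kn] := @reach_K x o (connO x o Ox Oo).
  have := @LB f n.+1 [fset o]%fset x _ f0.
  rewrite /W (asboolT Ox) -(fineK (fin x Ox)) lee_fin => H.
  apply: lt_le_trans (H _) => [|y]; last by rewrite inE => /eqP ->.
  rewrite /Sfin big_ord_recr /= big_seq_fset1.
  apply: ltr_wpDl.
    by apply: sumr_ge0 => i _; rewrite big_seq_fset1 mulr_ge0 ?K_ge0.
  by rewrite mulr_gt0 // mulr_gt0 // powR_gt0 // upos.
- move=> x Ox; apply: le_trans (@superharm f x f0 fin Ox); rewrite lerD2r.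
  rewrite /f ler_wpM2l //; apply: ge0_ler_powR; rewrite ?nnegrE ?W0 //.
  + by apply: ltW; apply: lt_trans q1.
  + by apply: ltW; exact: upos.
  + exact: Wu.
Qed.

Definition IIIprop o := exists2 C : R, 0 < C &
      forall x, Omega x ->
        (green_op mu Omega (fun y => (sigma y)%:E * green mu Omega o y `^ q) x
           <= C%:E * green mu Omega o x)%E /\
        (green mu Omega o x < +oo)%E.

Lemma pw_to_III w o : pw w -> Omega o -> 0 < sigma o -> IIIprop o.
Proof.
move=> [w0 wout wpos wsup] Oo so.
have q0 : 0 <= q by apply: ltW; apply: lt_trans q1.
have q1' : 1 <= q by exact: ltW.
pose f1 y := sigma y * w y `^ q.
have f10 y : 0 <= f1 y by rewrite mulr_ge0 ?powR_ge0.
have Gw x : Omega x -> (Gop f1 x <= (w x)%:E)%E.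
  by apply: minimal => // y Oy; exact: wsup.
pose a := sigma o * w o `^ q * muv mu o.
have a0 : 0 < a by rewrite mulr_gt0 // mulr_gt0 // powR_gt0 // wpos.
have ga x : Omega x -> (green mu Omega x o * a%:E <= (w x)%:E)%E.
  by move=> Ox; apply: le_trans (Gw x Ox); exact: Gop_single.
have gfin x : Omega x -> green mu Omega o x \is a fin_num.
  move=> Ox; rewrite green_sym; have := ga x Ox; have := green_ge0 x o.
  case: (green mu Omega x o) => [r| |] // _.
  by rewrite gt0_mulye ?lte_fin.
pose h x := fine (green mu Omega o x).
have hE x : Omega x -> green mu Omega o x = (h x)%:E by move=> Ox; rewrite fineK // gfin.
have hout x : ~ Omega x -> h x = 0 by move=> nO; rewrite /h green_outr.
have h0 x : 0 <= h x by apply: fine_ge0; exact: green_ge0.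
have hpos x : Omega x -> 0 < h x.
  by move=> Ox; rewrite -lte_fin -hE //; exact: green_pos (connO o x Oo Ox).
have ah x : a * h x <= w x.
  have [Ox|nO] := pselect (Omega x); last by rewrite hout // mulr0.
  by have := ga x Ox; rewrite green_sym hE // -EFinM lee_fin mulrC.
have hsup x : Omega x -> \sum_(z <- Nb x) P x z * h z <= h x.
  pose d y := if y == o then (muv mu o)^-1 else 0.
  have d0 y : 0 <= d y by rewrite /d; case: eqP => _ //; rewrite invr_ge0 ltW.
  have dfin z : Omega z -> Gop d z \is a fin_num by move=> Oz; rewrite Gop_delta // green_sym gfin.
  have Wd z : W d z = h z.
    rewrite /W; case: asboolP => Oz; last by rewrite hout.
    by rewrite Gop_delta // green_sym.
  move=> Ox; have := @superharm d x d0 dfin Ox.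
  have -> : \sum_(z <- Nb x) P x z * W d z = \sum_(z <- Nb x) P x z * h z.
    by apply: eq_bigr => z _; rewrite Wd.
  rewrite Wd; have := d0 x; lra.
pose c := (q - 1) / a * (a / 2) `^ q.
have c0 : 0 < c.
  by rewrite mulr_gt0 ?powR_gt0 ?divr_gt0 // subr_gt0.
pose v z := h z * psi q a (w z / h z).
have v0 z : 0 <= v z.
  by rewrite mulr_ge0 // psi_ge0 // divr_ge0.
have vh z : v z <= h z.
  rewrite -[X in _ <= X]mulr1; apply: ler_wpM2l => //; apply: psi_le1 => //.
  by rewrite divr_ge0.
have core' x : Omega x -> c * sigma x * h x `^ q + \sum_(z <- Nb x) P x z * v z <= v x.
  move=> Ox; exact: (core q1' a0 (hpos x Ox) (ah x) (P_ge0 x) h0 ah (hsup x Ox)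
     (sigma_ge0 x) (wsup x Ox)).
pose f2 y := sigma y * h y `^ q.
have f20 y : 0 <= f2 y by rewrite mulr_ge0 ?powR_ge0.
have G2 x : Omega x -> (Gop f2 x <= (h x / c)%:E)%E.
  move=> Ox; apply: le_trans (@minimal f2 (fun z => v z / c) f20 _ _ x Ox) _.
  - by move=> z; rewrite divr_ge0 // ltW.
  - move=> y Oy; rewrite ler_pdivlMr //.
    have -> : (f2 y + \sum_(z <- Nb y) P y z * (v z / c)) * c =
        c * sigma y * h y `^ q + \sum_(z <- Nb y) P y z * v z.
      rewrite mulrDl mulr_suml /f2; congr (_ + _); first by ring.
      apply: eq_bigr => z _; field; rewrite gt_eqF //.
    exact: core' y Oy.
  by rewrite lee_fin ler_pM2r ?invr_gt0.
exists c^-1; first by rewrite invr_gt0.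
move=> x Ox; split; last by rewrite hE // ltry.
have -> : green_op mu Omega (fun y => ((sigma y)%:E * green mu Omega o y `^ q)%E) x = Gop f2 x.
  rewrite /Gop /green_op; apply: eq_esum => y Oy.
  by rewrite hE // poweR_EFin.
rewrite hE // -EFinM; apply: le_trans (G2 x Ox) _; by rewrite lee_fin mulrC.
Qed.

Lemma III_to_II o : Omega o -> IIIprop o -> exists u, IIprop u.
Proof.
move=> Oo [C C0 HC].
have q0 : 0 <= q by apply: ltW; apply: lt_trans q1.
pose h x := fine (green mu Omega o x).
have h0 x : 0 <= h x by apply: fine_ge0; exact: green_ge0.
have hE x : Omega x -> green mu Omega o x = (h x)%:E.
  move=> Ox; rewrite fineK // ge0_fin_numE ?green_ge0 //; exact: (HC x Ox).2.
have hpos x : Omega x -> 0 < h x.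
  by move=> Ox; rewrite -lte_fin -hE //; exact: green_pos (connO o x Oo Ox).
pose lam := (C^-1) `^ ((q - 1)^-1).
have lam0 : 0 < lam by rewrite powR_gt0 // invr_gt0.
have lamq : lam `^ q * C = lam.
  have -> : q = (q - 1) + 1 by ring.
  rewrite powRD; last by apply/implyP => _; rewrite gt_eqF.
  rewrite powRr1 ?ltW // /lam -powRrM mulVf ?powRr1 ?invr_ge0 ?ltW //; last first.
    by rewrite subr_eq0 gt_eqF.
  by rewrite mulrAC mulVf ?gt_eqF // mul1r.
exists (fun x => lam * h x); split; first by move=> x Ox; rewrite mulr_gt0 // hpos.
move=> x Ox.
pose f2 y := sigma y * h y `^ q.
have f20 y : 0 <= f2 y by rewrite mulr_ge0 ?powR_ge0.
have -> : (fun y => (sigma y * (lam * h y) `^ q)%:E) = (fun y => (lam `^ q * f2 y)%:E).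
  apply/funext => y; congr EFin; rewrite (@powRM _ lam (h y) q (ltW lam0) (h0 y)) /f2; ring.
have E2 : Gop f2 x = green_op mu Omega (fun y => ((sigma y)%:E * green mu Omega o y `^ q)%E) x.
  rewrite /Gop /green_op; apply: eq_esum => y Oy.
  by rewrite hE // poweR_EFin.
have := @Gop_scale f2 (lam `^ q) x f20 (powR_ge0 _ _).
rewrite /Gop => H; apply: le_trans H _.
rewrite -/(Gop f2 x) E2; apply: le_trans (lee_wpmul2l _ ((HC x Ox).1)) _.
  by rewrite lee_fin powR_ge0.
by rewrite hE // -!EFinM mulrA lamq.
Qed.

Lemma main_equiv : [/\ (exists u, Iprop u) <-> (exists u, IIprop u),
   (exists u, IIprop u) <-> (exists o, [/\ Omega o, 0 < sigma o & IIIprop o]) &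
   (exists o, [/\ Omega o, 0 < sigma o & IIIprop o]) <->
   (forall o, Omega o -> 0 < sigma o -> IIIprop o)].
Proof.
split.
- split => [[u Hu]|[u Hu]]; first by exists u; exact: I_to_II u Hu.
  by have [w Hw] := II_to_pw u Hu; exists w; exact: pw_to_I w Hw.
- split => [[u Hu]|[o [Oo so H3]]]; last exact: III_to_II o Oo H3.
  have [w Hw] := II_to_pw u Hu; case: sig_ex => o Oo so; exists o; split => //.
  exact: pw_to_III w o Hw Oo so.
- split => [[o [Oo so H3]] o' Oo' so'|H].
    have [u Hu] := III_to_II o Oo H3; have [w Hw] := II_to_pw u Hu.
    exact: pw_to_III w o' Hw Oo' so'.
  by case: sig_ex => o Oo so; exists o; split => //; exact: H.
Qed.
End Main.
End Thm.


Theorem theorem1p1 (R : realType) (V : countType) (mu : V -> V -> R)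
  (Omega : set V) (sigma : V -> R) (q : R) :
  weighted_graph mu -> locally_finite mu ->
  infinite_set [set: V] -> connected_set mu [set: V] ->
  connected_set mu Omega ->
  (Omega != [set: V] \/ ~ parabolic mu) ->
  (forall x, 0 <= sigma x) -> (forall x, ~ Omega x -> sigma x = 0) ->
  (exists2 x, Omega x & sigma x != 0) ->
  1 < q ->
  let I := exists u : V -> R,
      (forall x, Omega x -> 0 < u x) /\
      (forall x, bdry mu Omega x -> u x = 0) /\
      (forall x, Omega x -> sigma x * u x `^ q <= - laplacian mu u x) in
  let II := exists u : V -> R,
      (forall x, Omega x -> 0 < u x) /\
      (forall x, Omega x ->
         (green_op mu Omega (fun y => (sigma y * u y `^ q)%:E) x <= (u x)%:E)%E) in
  let III o := exists2 C : R, 0 < C &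
      forall x, Omega x ->
        (green_op mu Omega (fun y => (sigma y)%:E * green mu Omega o y `^ q) x
           <= C%:E * green mu Omega o x)%E /\
        (green mu Omega o x < +oo)%E in
  [/\ I <-> II,
      II <-> (exists o, [/\ Omega o, 0 < sigma o & III o]) &
      (exists o, [/\ Omega o, 0 < sigma o & III o]) <->
      (forall o, Omega o -> 0 < sigma o -> III o)].
Proof.
move=> [mu_ge0 mu_sym] lf infV connV connO _ sig0 sigout [o0 Oo0 so0] q1.
have muv_gt0 : forall x, 0 < muv mu x.
  move=> x.
  have [y yx] : exists y, y != x.
    apply: contrapT => H; apply: infV.
    have -> : [set: V] = [set x].
      apply/seteqP; split => // y _ /=; apply: contrapT => Hy; apply: H; exists y.
      by apply/eqP => E; apply: Hy; rewrite E.
    exact: finite_set1.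
  have := connV x y Logic.I Logic.I => H; inversion H; subst.
    by rewrite eqxx in yx.
  rewrite /muv fsbig_finite; last exact: lf.
  rewrite (bigD1_seq y0) /=; last exact: fset_uniq.
  - apply: ltr_wpDr => //; apply: sumr_ge0 => z _; exact: mu_ge0.
  - by rewrite in_fset_set; [apply: mem_set; assumption | exact: lf].
have sig_ex : exists2 o, Omega o & 0 < sigma o.
  by exists o0 => //; rewrite lt_def so0 sig0.
exact: (@main_equiv R V mu Omega mu_ge0 mu_sym lf muv_gt0 sigma q sig0 q1 connO sig_ex).
Qed.
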